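(* Let $u$ be a harmonic function on $\mathbf D$ for which $C:=\sup\{u(z)\,(\log\frac{e}{1-|z|})^{-1}: z\in\mathbf D\}<\infty$. For every $\sigma>0$ there is $\tau_1=\tau_1(C,\sigma)>0$ such that: whenever $\theta\in[0,2\pi]$ and $r\in(0,1)$ satisfy $u(re^{i\theta})>\sigma\log\frac{e}{1-r}$, then $u(re^{i(\theta+\delta)})>\frac\sigma2\log\frac{e}{1-r}$ for all $|\delta|<\tau_1(1-r)$.
   Context: $\mathbf D$ is the open unit disc. *)

(* Defs.v *)
From Stdlib Require Import Reals.
From Coquelicot Require Import Coquelicot.
Open Scope R_scope.

(* Points of the plane are pairs (x, y) of reals, z = x + i y. *)
Definition in_D (x y : R) : Prop := x ^ 2 + y ^ 2 < 1.

Definition cont2 (f : R -> R -> R) (x y : R) : Prop :=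
  continuous (fun p : R * R => f (fst p) (snd p)) (x, y).

Definition harmonic_D (u : R -> R -> R) : Prop :=
  exists ux uy uxx uxy uyx uyy : R -> R -> R,
    forall x y, in_D x y ->
      is_derive (fun t => u t y) x (ux x y) /\
      is_derive (fun t => u x t) y (uy x y) /\
      is_derive (fun t => ux t y) x (uxx x y) /\
      is_derive (fun t => ux x t) y (uxy x y) /\
      is_derive (fun t => uy t y) x (uyx x y) /\
      is_derive (fun t => uy x t) y (uyy x y) /\
      cont2 u x y /\ cont2 ux x y /\ cont2 uy x y /\
      cont2 uxx x y /\ cont2 uxy x y /\ cont2 uyx x y /\ cont2 uyy x y /\
      uxx x y + uyy x y = 0.

Definition wlog (r : R) : R := ln (exp 1 / (1 - r)).

Definition ratio_set (u : R -> R -> R) : R -> Prop :=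
  fun v => exists x y, in_D x y /\ v = u x y / wlog (sqrt (x ^ 2 + y ^ 2)).

(* Main.v *)
Require Import Defs.
From Stdlib Require Import Reals Lra Psatz.
From Coquelicot Require Import Coquelicot.
Open Scope R_scope.


Lemma cont2_2d f x y : cont2 f x y -> continuity_2d_pt f x y.
Proof. intros H. apply continuity_2d_pt_filterlim. exact H. Qed.

Lemma inD_open x y : in_D x y -> locally_2d in_D x y.
Proof.
  unfold in_D; intros H.
  set (s := x^2+y^2) in *.
  assert (Hd : 0 < Rmin 1 ((1 - s) / (2*Rabs x + 2*Rabs y + 2))).
  { apply Rmin_pos; [lra|]. apply Rdiv_lt_0_compat; [lra|].
    pose proof (Rabs_pos x); pose proof (Rabs_pos y); lra. }
  exists (mkposreal _ Hd). simpl. intros u v Hu Hv.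
  pose proof (Rmin_l 1 ((1 - s) / (2*Rabs x + 2*Rabs y + 2))) as H1.
  pose proof (Rmin_r 1 ((1 - s) / (2*Rabs x + 2*Rabs y + 2))) as H2.
  set (d := Rmin 1 ((1 - s) / (2*Rabs x + 2*Rabs y + 2))) in *.
  assert (Hk : d * (2*Rabs x + 2*Rabs y + 2) <= 1 - s).
  { pose proof (Rabs_pos x); pose proof (Rabs_pos y).
    apply (Rmult_le_compat_r (2*Rabs x + 2*Rabs y + 2)) in H2; [|lra].
    unfold Rdiv in H2. rewrite Rmult_assoc, Rinv_l in H2; lra. }
  replace u with (x + (u - x)) by ring. replace v with (y + (v - y)) by ring.
  set (p := u - x) in *. set (q := v - y) in *.
  assert (Hp: Rabs p * Rabs p <= d * Rabs p) by (apply Rmult_le_compat_r; [apply Rabs_pos|lra]).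
  assert (Hq: Rabs q * Rabs q <= d * Rabs q) by (apply Rmult_le_compat_r; [apply Rabs_pos|lra]).
  assert (x * p <= Rabs x * Rabs p) by (rewrite <- Rabs_mult; apply Rle_abs).
  assert (y * q <= Rabs y * Rabs q) by (rewrite <- Rabs_mult; apply Rle_abs).
  assert (Rabs x * Rabs p <= Rabs x * d) by (apply Rmult_le_compat_l; [apply Rabs_pos|lra]).
  assert (Rabs y * Rabs q <= Rabs y * d) by (apply Rmult_le_compat_l; [apply Rabs_pos|lra]).
  assert (p*p = Rabs p * Rabs p) by (rewrite <- Rabs_mult; symmetry; apply Rabs_right; nra).
  assert (q*q = Rabs q * Rabs q) by (rewrite <- Rabs_mult; symmetry; apply Rabs_right; nra).
  unfold s in *. nra.
Qed.

Lemma between_abs a b t : Rmin a b <= t <= Rmax a b -> Rabs (t - a) <= Rabs (b - a).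
Proof. unfold Rmin, Rmax; destruct (Rle_dec a b); intros; unfold Rabs;
  repeat destruct Rcase_abs; lra. Qed.

Lemma C1_diff (F Fx Fy : R -> R -> R) x0 y0 :
  (forall x y, in_D x y -> is_derive (fun t => F t y) x (Fx x y) /\
                           is_derive (fun t => F x t) y (Fy x y)) ->
  cont2 Fx x0 y0 -> cont2 Fy x0 y0 -> in_D x0 y0 ->
  differentiable_pt_lim F x0 y0 (Fx x0 y0) (Fy x0 y0).
Proof.
  intros HF Cx Cy HD eps.
  apply cont2_2d in Cx; apply cont2_2d in Cy.
  assert (He2 : 0 < eps/2) by (destruct eps; simpl; lra).
  destruct (Cx (mkposreal _ He2)) as [d1 H1].
  destruct (Cy (mkposreal _ He2)) as [d2 H2].
  destruct (inD_open _ _ HD) as [d3 H3].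
  assert (Hd : 0 < Rmin d1 (Rmin d2 d3)).
  { destruct d1, d2, d3; simpl. repeat apply Rmin_pos; lra. }
  exists (mkposreal _ Hd). simpl. intros u v Hu Hv.
  pose proof (Rmin_l d1 (Rmin d2 d3)); pose proof (Rmin_r d1 (Rmin d2 d3));
  pose proof (Rmin_l d2 d3); pose proof (Rmin_r d2 d3).
  simpl in H1, H2.
  destruct (MVT_gen (fun t => F t v) x0 u (fun t => Fx t v)) as [c [Hc Ec]].
  { intros t Ht. apply HF. apply H3; [|lra].
    assert (Rmin x0 u <= t <= Rmax x0 u) as Hb by lra. apply between_abs in Hb. lra. }
  { intros t Ht. apply between_abs in Ht.
    assert (Hi: in_D t v) by (apply H3; lra).
    destruct (HF _ _ Hi) as [Hd1 _].
    apply (proj2 (continuity_pt_filterlim _ _)).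
    apply (ex_derive_continuous (fun t => F t v)). exists (Fx t v). exact Hd1. }
  assert (Hz : Rabs (x0 - x0) < d3) by (rewrite Rminus_eq_0, Rabs_R0; destruct d3; simpl; lra).
  destruct (MVT_gen (fun t => F x0 t) y0 v (fun t => Fy x0 t)) as [c' [Hc' Ec']].
  { intros t Ht. apply HF. apply H3; [exact Hz|].
    assert (Rmin y0 v <= t <= Rmax y0 v) as Hb by lra. apply between_abs in Hb. lra. }
  { intros t Ht. apply between_abs in Ht.
    assert (Hi: in_D x0 t) by (apply H3; [exact Hz|lra]).
    destruct (HF _ _ Hi) as [_ Hd1].
    apply (proj2 (continuity_pt_filterlim _ _)).
    apply (ex_derive_continuous (fun t => F x0 t)). exists (Fy x0 t). exact Hd1. }
  simpl in Ec, Ec'.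
  apply between_abs in Hc. apply between_abs in Hc'.
  assert (A1 : Rabs (Fx c v - Fx x0 y0) < eps/2) by (apply H1; lra).
  assert (A2 : Rabs (Fy x0 c' - Fy x0 y0) < eps/2).
  { apply H2; [rewrite Rminus_eq_0, Rabs_R0; destruct d1; simpl in *; lra | lra]. }
  replace (F u v - F x0 y0 - (Fx x0 y0 * (u - x0) + Fy x0 y0 * (v - y0)))
    with ((Fx c v - Fx x0 y0) * (u - x0) + (Fy x0 c' - Fy x0 y0) * (v - y0))
    by (replace (F u v - F x0 y0) with ((F u v - F x0 v) + (F x0 v - F x0 y0)) by ring;
        rewrite Ec, Ec'; ring).
  eapply Rle_trans; [apply Rabs_triang|]. rewrite !Rabs_mult.
  pose proof (Rmax_l (Rabs (u - x0)) (Rabs (v - y0))).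
  pose proof (Rmax_r (Rabs (u - x0)) (Rabs (v - y0))).
  pose proof (Rabs_pos (u-x0)); pose proof (Rabs_pos (v-y0)).
  pose proof (Rabs_pos (Fx c v - Fx x0 y0)); pose proof (Rabs_pos (Fy x0 c' - Fy x0 y0)).
  set (M := Rmax (Rabs (u - x0)) (Rabs (v - y0))) in *.
  assert (Rabs (Fx c v - Fx x0 y0) * Rabs (u - x0) <= eps/2 * M).
  { apply Rmult_le_compat; lra. }
  assert (Rabs (Fy x0 c' - Fy x0 y0) * Rabs (v - y0) <= eps/2 * M).
  { apply Rmult_le_compat; lra. }
  lra.
Qed.


Lemma chain (F Fx Fy : R -> R -> R) (X Y : R -> R) t dX dY :
  (forall x y, in_D x y -> is_derive (fun t => F t y) x (Fx x y) /\
                           is_derive (fun t => F x t) y (Fy x y)) ->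
  (forall x y, in_D x y -> cont2 Fx x y /\ cont2 Fy x y) ->
  in_D (X t) (Y t) -> is_derive X t dX -> is_derive Y t dY ->
  is_derive (fun s => F (X s) (Y s)) t (Fx (X t) (Y t) * dX + Fy (X t) (Y t) * dY).
Proof.
  intros HF HC HD HX HY.
  apply is_derive_Reals. apply is_derive_Reals in HX. apply is_derive_Reals in HY.
  apply (derivable_pt_lim_comp_2d F X Y t); auto.
  destruct (HC _ _ HD). apply C1_diff; auto.
Qed.

Lemma c2d_cont_t f x y : continuity_2d_pt f x y -> continuous (fun t => f x t) y.
Proof.
  intros H. apply filterlim_locally. intros eps. destruct (H eps) as [d Hd].
  exists d. intros t Ht. apply Hd. rewrite Rminus_eq_0, Rabs_R0; apply cond_pos. exact Ht.
Qed.

Lemma polar_c2d f a b r0 s0 : cont2 f (a + r0 * cos s0) (b + r0 * sin s0) ->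
  continuity_2d_pt (fun r s => f (a + r * cos s) (b + r * sin s)) r0 s0.
Proof.
  intros Hf eps. apply cont2_2d in Hf. destruct (Hf eps) as [d Hd].
  assert (CC : continuity_2d_pt (fun r s => cos s) r0 s0).
  { apply (continuity_1d_2d_pt_comp cos (fun _ v => v)). apply continuity_cos. apply continuity_2d_pt_id2. }
  assert (CS : continuity_2d_pt (fun r s => sin s) r0 s0).
  { apply (continuity_1d_2d_pt_comp sin (fun _ v => v)). apply continuity_sin. apply continuity_2d_pt_id2. }
  assert (CX : continuity_2d_pt (fun r s => a + r * cos s) r0 s0).
  { apply continuity_2d_pt_plus. apply continuity_2d_pt_const. apply continuity_2d_pt_mult; auto. apply continuity_2d_pt_id1. }
  assert (CY : continuity_2d_pt (fun r s => b + r * sin s) r0 s0).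
  { apply continuity_2d_pt_plus. apply continuity_2d_pt_const. apply continuity_2d_pt_mult; auto. apply continuity_2d_pt_id1. }
  destruct (CX d) as [d1 H1]. destruct (CY d) as [d2 H2].
  assert (Hm : 0 < Rmin d1 d2) by (apply Rmin_pos; apply cond_pos).
  exists (mkposreal _ Hm). simpl. intros u v Hu Hv.
  pose proof (Rmin_l d1 d2); pose proof (Rmin_r d1 d2).
  apply Hd. apply H1; lra. apply H2; lra.
Qed.


Lemma param_deriv (f df : R -> R -> R) x R0 :
  Rabs x < R0 ->
  (forall y t, Rabs y < R0 -> is_derive (fun z => f z t) y (df y t)) ->
  (forall y t, Rabs y < R0 -> continuity_2d_pt df y t) ->
  (forall y t, Rabs y < R0 -> continuity_2d_pt f y t) ->
  is_derive (fun z => RInt (fun t => f z t) 0 (2*PI)) x (RInt (fun t => df x t) 0 (2*PI)).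
Proof.
  intros Hx Hd Hcd Hcf.
  assert (Hloc : locally x (fun y => Rabs y < R0)).
  { assert (He : 0 < R0 - Rabs x) by lra. exists (mkposreal _ He). intros y Hy.
    change (Rabs (y - x) < R0 - Rabs x) in Hy.
    pose proof (Rabs_triang_inv y x). lra. }
  replace (RInt (fun t => df x t) 0 (2*PI)) with (RInt (fun t => Derive (fun u => f u t) x) 0 (2*PI)).
  2:{ apply RInt_ext. intros t _. apply is_derive_unique. apply Hd; auto. }
  apply is_derive_RInt_param.
  - eapply filter_imp; [|exact Hloc]; simpl. intros y Hy t _. exists (df y t). apply Hd; auto.
  - intros t _. apply continuity_2d_pt_ext_loc with (f := df).
    + assert (He : 0 < R0 - Rabs x) by lra. exists (mkposreal _ He). intros u v Hu Hv. simpl in Hu.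
      pose proof (Rabs_triang_inv u x). symmetry. apply is_derive_unique. apply Hd. lra.
    + apply Hcd; auto.
  - eapply filter_imp; [|exact Hloc]; simpl. intros y Hy. apply (@ex_RInt_continuous R_CompleteNormedModule).
    intros z _. apply c2d_cont_t. auto.
Qed.


Definition harm (u ux uy uxx uxy uyx uyy : R -> R -> R) : Prop :=
    forall x y, in_D x y ->
      is_derive (fun t => u t y) x (ux x y) /\
      is_derive (fun t => u x t) y (uy x y) /\
      is_derive (fun t => ux t y) x (uxx x y) /\
      is_derive (fun t => ux x t) y (uxy x y) /\
      is_derive (fun t => uy t y) x (uyx x y) /\
      is_derive (fun t => uy x t) y (uyy x y) /\
      cont2 u x y /\ cont2 ux x y /\ cont2 uy x y /\
      cont2 uxx x y /\ cont2 uxy x y /\ cont2 uyx x y /\ cont2 uyy x y /\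
      uxx x y + uyy x y = 0.

Definition pol (f : R -> R -> R) a b r s := f (a + r * cos s) (b + r * sin s).

Lemma pol_dr (F Fx Fy : R -> R -> R) a b r0 s :
  (forall x y, in_D x y -> is_derive (fun t => F t y) x (Fx x y) /\
                           is_derive (fun t => F x t) y (Fy x y)) ->
  (forall x y, in_D x y -> cont2 Fx x y /\ cont2 Fy x y) ->
  in_D (a + r0 * cos s) (b + r0 * sin s) ->
  is_derive (fun r => pol F a b r s) r0 (pol Fx a b r0 s * cos s + pol Fy a b r0 s * sin s).
Proof.
  intros HF HC HD. unfold pol.
  apply (chain F Fx Fy (fun r => a + r * cos s) (fun r => b + r * sin s)); auto.
  - auto_derive; auto. ring.
  - auto_derive; auto. ring.
Qed.

Lemma pol_ds (F Fx Fy : R -> R -> R) a b r s0 :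
  (forall x y, in_D x y -> is_derive (fun t => F t y) x (Fx x y) /\
                           is_derive (fun t => F x t) y (Fy x y)) ->
  (forall x y, in_D x y -> cont2 Fx x y /\ cont2 Fy x y) ->
  in_D (a + r * cos s0) (b + r * sin s0) ->
  is_derive (fun s => pol F a b r s) s0
    (pol Fx a b r s0 * (- (r * sin s0)) + pol Fy a b r s0 * (r * cos s0)).
Proof.
  intros HF HC HD. unfold pol.
  apply (chain F Fx Fy (fun s => a + r * cos s) (fun s => b + r * sin s)); auto.
  - auto_derive; auto. ring.
  - auto_derive; auto. ring.
Qed.


Lemma der_mulc f x l c : is_derive f x l -> is_derive (fun z => f z * c) x (l * c).
Proof. intros H. evar_last. apply (is_derive_mult f (fun _ => c)). exact H. apply is_derive_const.
  intros; apply Rmult_comm. unfold plus, mult, zero; simpl. unfold mult; simpl. ring. Qed.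

Lemma w_c2d w r s : (forall s, continuous w s) -> continuity_2d_pt (fun _ s => w s) r s.
Proof. intros H. apply (continuity_1d_2d_pt_comp w (fun _ v => v)).
  apply (proj2 (continuity_pt_filterlim _ _)). apply H. apply continuity_2d_pt_id2. Qed.

Lemma pol_c2d f a b r0 s0 : cont2 f (a + r0 * cos s0) (b + r0 * sin s0) ->
  continuity_2d_pt (pol f a b) r0 s0.
Proof. intros H. apply (polar_c2d f a b r0 s0 H). Qed.

Lemma cos_cont s : continuous cos s.
Proof. apply (proj1 (continuity_pt_filterlim _ _)). apply continuity_cos. Qed.
Lemma sin_cont s : continuous sin s.
Proof. apply (proj1 (continuity_pt_filterlim _ _)). apply continuity_sin. Qed.


Section Polar.
Variables u ux uy uxx uxy uyx uyy : R -> R -> R.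
Hypothesis Hh : harm u ux uy uxx uxy uyx uyy.
Variables a b R0 : R.
Hypothesis HR : forall r s, Rabs r < R0 -> in_D (a + r * cos s) (b + r * sin s).

Let HFu x y (H : in_D x y) := let p := Hh x y H in conj (proj1 p) (proj1 (proj2 p)).
Lemma HF_u : forall x y, in_D x y -> is_derive (fun t => u t y) x (ux x y) /\ is_derive (fun t => u x t) y (uy x y).
Proof. intros x y H; destruct (Hh x y H) as (?&?&?); auto. Qed.
Lemma HF_ux : forall x y, in_D x y -> is_derive (fun t => ux t y) x (uxx x y) /\ is_derive (fun t => ux x t) y (uxy x y).
Proof. intros x y H; destruct (Hh x y H) as (?&?&?&?&?); auto. Qed.
Lemma HF_uy : forall x y, in_D x y -> is_derive (fun t => uy t y) x (uyx x y) /\ is_derive (fun t => uy x t) y (uyy x y).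
Proof. intros x y H; destruct (Hh x y H) as (?&?&?&?&?&?&?); auto. Qed.
Lemma HC_u : forall x y, in_D x y -> cont2 ux x y /\ cont2 uy x y.
Proof. intros x y H; destruct (Hh x y H) as (?&?&?&?&?&?&?&?&?&?); auto. Qed.
Lemma HC_ux : forall x y, in_D x y -> cont2 uxx x y /\ cont2 uxy x y.
Proof. intros x y H; destruct (Hh x y H) as (?&?&?&?&?&?&?&?&?&?&?&?); auto. Qed.
Lemma HC_uy : forall x y, in_D x y -> cont2 uyx x y /\ cont2 uyy x y.
Proof. intros x y H; destruct (Hh x y H) as (?&?&?&?&?&?&?&?&?&?&?&?&?&?); auto. Qed.
Lemma HC0 : forall x y, in_D x y -> cont2 u x y.
Proof. intros x y H; destruct (Hh x y H) as (?&?&?&?&?&?&?&?); auto. Qed.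
Lemma Hlap : forall x y, in_D x y -> uxx x y + uyy x y = 0.
Proof. intros x y H; destruct (Hh x y H) as (?&?&?&?&?&?&?&?&?&?&?&?&?&?); auto. Qed.

Definition Hr r s := pol ux a b r s * cos s + pol uy a b r s * sin s.
Definition Hrr r s := (pol uxx a b r s * cos s + pol uxy a b r s * sin s) * cos s
                    + (pol uyx a b r s * cos s + pol uyy a b r s * sin s) * sin s.
Definition Ht r s := pol ux a b r s * (- (r * sin s)) + pol uy a b r s * (r * cos s).
Definition Htt r s := (pol uxx a b r s * (- (r * sin s)) + pol uxy a b r s * (r * cos s)) * (- (r * sin s))
   + pol ux a b r s * (- (r * cos s))
   + ((pol uyx a b r s * (- (r * sin s)) + pol uyy a b r s * (r * cos s)) * (r * cos s)
   + pol uy a b r s * (- (r * sin s))).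

Lemma d_H r s : Rabs r < R0 -> is_derive (fun z => pol u a b z s) r (Hr r s).
Proof. intros H. apply pol_dr; auto using HF_u, HC_u. Qed.

Lemma d_Hr r s : Rabs r < R0 -> is_derive (fun z => Hr z s) r (Hrr r s).
Proof. intros H. unfold Hr, Hrr. apply (is_derive_plus (fun z => pol ux a b z s * cos s) (fun z => pol uy a b z s * sin s));
  apply der_mulc; apply pol_dr; auto using HF_ux, HC_ux, HF_uy, HC_uy. Qed.

Lemma d_Hs r s : Rabs r < R0 -> is_derive (fun z => pol u a b r z) s (Ht r s).
Proof. intros H. apply pol_ds; auto using HF_u, HC_u. Qed.

Lemma d_Ht r s : Rabs r < R0 -> is_derive (fun z => Ht r z) s (Htt r s).
Proof. intros H. unfold Ht, Htt.
  apply (is_derive_plus (fun z => pol ux a b r z * (- (r * sin z))) (fun z => pol uy a b r z * (r * cos z))).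
  - evar_last. apply (is_derive_mult (fun z => pol ux a b r z) (fun z => - (r * sin z))).
    apply pol_ds; auto using HF_ux, HC_ux. auto_derive; auto. intros; apply Rmult_comm.
    unfold plus, mult; simpl. ring.
  - evar_last. apply (is_derive_mult (fun z => pol uy a b r z) (fun z => (r * cos z))).
    apply pol_ds; auto using HF_uy, HC_uy. auto_derive; auto. intros; apply Rmult_comm.
    unfold plus, mult; simpl. ring.
Qed.

Lemma lap_id r s : Rabs r < R0 -> r ^ 2 * Hrr r s + r * Hr r s + Htt r s = 0.
Proof. intros H. pose proof (Hlap _ _ (HR r s H)) as L. pose proof (sin2_cos2 s) as SC.
  unfold Hrr, Hr, Htt, pol in *. unfold Rsqr in SC.
  replace (pol uyy a b r s) with (- pol uxx a b r s) by (unfold pol; lra).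
  unfold pol. nra.
Qed.


Lemma cos_c2d r s : continuity_2d_pt (fun _ s => cos s) r s.
Proof. apply w_c2d, cos_cont. Qed.
Lemma sin_c2d r s : continuity_2d_pt (fun _ s => sin s) r s.
Proof. apply w_c2d, sin_cont. Qed.

Ltac c2 := repeat match goal with
  | |- continuity_2d_pt (fun r s => pol _ _ _ r s) _ _ => apply pol_c2d
  | |- continuity_2d_pt (pol _ _ _) _ _ => apply pol_c2d
  | |- continuity_2d_pt (fun r s => cos s) _ _ => apply cos_c2d
  | |- continuity_2d_pt (fun r s => sin s) _ _ => apply sin_c2d
  | |- continuity_2d_pt (fun r s => r) _ _ => apply continuity_2d_pt_id1
  | |- continuity_2d_pt (fun r s => _ + _) _ _ => apply continuity_2d_pt_plus
  | |- continuity_2d_pt (fun r s => _ * _) _ _ => apply continuity_2d_pt_mult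
  | |- continuity_2d_pt (fun r s => - _) _ _ => apply continuity_2d_pt_opp
  end.

Ltac cD H := match goal with
  | |- cont2 ux _ _ => exact (proj1 (HC_u _ _ (HR _ _ H)))
  | |- cont2 uy _ _ => exact (proj2 (HC_u _ _ (HR _ _ H)))
  | |- cont2 uxx _ _ => exact (proj1 (HC_ux _ _ (HR _ _ H)))
  | |- cont2 uxy _ _ => exact (proj2 (HC_ux _ _ (HR _ _ H)))
  | |- cont2 uyx _ _ => exact (proj1 (HC_uy _ _ (HR _ _ H)))
  | |- cont2 uyy _ _ => exact (proj2 (HC_uy _ _ (HR _ _ H)))
  | |- cont2 u _ _ => exact (HC0 _ _ (HR _ _ H))
  end.

Lemma c_H r s : Rabs r < R0 -> continuity_2d_pt (pol u a b) r s.
Proof. intros H. c2; cD H. Qed.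
Lemma c_Hr r s : Rabs r < R0 -> continuity_2d_pt Hr r s.
Proof. intros H. unfold Hr. c2; cD H. Qed.
Lemma c_Hrr r s : Rabs r < R0 -> continuity_2d_pt Hrr r s.
Proof. intros H. unfold Hrr. c2; cD H. Qed.
Lemma c_Ht r s : Rabs r < R0 -> continuity_2d_pt Ht r s.
Proof. intros H. unfold Ht. c2; cD H. Qed.
Lemma c_Htt r s : Rabs r < R0 -> continuity_2d_pt Htt r s.
Proof. intros H. unfold Htt. c2; cD H. Qed.


Section Weight.
Variables w w1 w2 : R -> R.
Hypothesis Hw : forall s, is_derive w s (w1 s).
Hypothesis Hw1 : forall s, is_derive w1 s (w2 s).
Hypothesis Hw2c : forall s, continuous w2 s.
Hypothesis Pw : w (2*PI) = w 0.
Hypothesis Pw1 : w1 (2*PI) = w1 0.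

Lemma wc s : continuous w s.
Proof. apply (ex_derive_continuous w). exists (w1 s). apply Hw. Qed.
Lemma w1c s : continuous w1 s.
Proof. apply (ex_derive_continuous w1). exists (w2 s). apply Hw1. Qed.

Definition G r := RInt (fun s => pol u a b r s * w s) 0 (2*PI).
Definition G1 r := RInt (fun s => Hr r s * w s) 0 (2*PI).
Definition G2 r := RInt (fun s => Hrr r s * w s) 0 (2*PI).
Definition Gw2 r := RInt (fun s => pol u a b r s * w2 s) 0 (2*PI).

Lemma dG r : Rabs r < R0 -> is_derive G r (G1 r).
Proof. intros H. unfold G, G1.
  apply (param_deriv (fun r s => pol u a b r s * w s) (fun r s => Hr r s * w s) r R0 H).
  - intros; apply der_mulc, d_H; auto.
  - intros; apply continuity_2d_pt_mult; [apply c_Hr; auto | apply w_c2d, wc].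
  - intros; apply continuity_2d_pt_mult; [apply c_H; auto | apply w_c2d, wc].
Qed.

Lemma dG1 r : Rabs r < R0 -> is_derive G1 r (G2 r).
Proof. intros H. unfold G1, G2.
  apply (param_deriv (fun r s => Hr r s * w s) (fun r s => Hrr r s * w s) r R0 H).
  - intros; apply der_mulc, d_Hr; auto.
  - intros; apply continuity_2d_pt_mult; [apply c_Hrr; auto | apply w_c2d, wc].
  - intros; apply continuity_2d_pt_mult; [apply c_Hr; auto | apply w_c2d, wc].
Qed.


Lemma exI (f : R -> R -> R) r : (forall s, continuity_2d_pt f r s) -> ex_RInt (fun s => f r s) 0 (2*PI).
Proof. intros H. apply (@ex_RInt_continuous R_CompleteNormedModule). intros z _. apply c2d_cont_t, H. Qed.

Lemma ode r : Rabs r < R0 -> r ^ 2 * G2 r + r * G1 r + Gw2 r = 0.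
Proof.
  intros H.
  set (K := fun s => Ht r s * w s - pol u a b r s * w1 s).
  set (dK := fun s => Htt r s * w s - pol u a b r s * w2 s).
  assert (IK : is_RInt dK 0 (2*PI) (minus (K (2*PI)) (K 0))).
  { apply (@is_RInt_derive R_CompleteNormedModule).
    - intros s _. unfold K, dK. evar_last.
      apply (is_derive_minus (fun s => Ht r s * w s) (fun s => pol u a b r s * w1 s)).
      apply (is_derive_mult (fun s => Ht r s) w). apply d_Ht; auto. apply Hw. intros; apply Rmult_comm.
      apply (is_derive_mult (fun s => pol u a b r s) w1). apply d_Hs; auto. apply Hw1. intros; apply Rmult_comm.
      unfold minus, plus, opp, mult; simpl. ring.
    - intros s _. unfold dK.
      apply (c2d_cont_t (fun r s => Htt r s * w s - pol u a b r s * w2 s)).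
      apply continuity_2d_pt_minus; apply continuity_2d_pt_mult.
      apply c_Htt; auto. apply w_c2d, wc. apply c_H; auto. apply w_c2d, Hw2c. }
  assert (EK : K (2*PI) = K 0).
  { unfold K, Ht, pol. rewrite Pw, Pw1, cos_2PI, sin_2PI, cos_0, sin_0. reflexivity. }
  rewrite EK in IK.
  assert (IA : is_RInt (fun s => Hrr r s * w s) 0 (2*PI) (G2 r)).
  { apply (@RInt_correct R_CompleteNormedModule). apply (exI (fun r s => Hrr r s * w s)). intros s.
    apply continuity_2d_pt_mult. apply c_Hrr; auto. apply w_c2d, wc. }
  assert (IB : is_RInt (fun s => Hr r s * w s) 0 (2*PI) (G1 r)).
  { apply (@RInt_correct R_CompleteNormedModule). apply (exI (fun r s => Hr r s * w s)). intros s.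
    apply continuity_2d_pt_mult. apply c_Hr; auto. apply w_c2d, wc. }
  assert (IC : is_RInt (fun s => pol u a b r s * w2 s) 0 (2*PI) (Gw2 r)).
  { apply (@RInt_correct R_CompleteNormedModule). apply (exI (fun r s => pol u a b r s * w2 s)). intros s.
    apply continuity_2d_pt_mult. apply c_H; auto. apply w_c2d, Hw2c. }
  pose proof (is_RInt_plus _ _ _ _ _ _ (is_RInt_plus _ _ _ _ _ _ (is_RInt_scal _ _ _ (r^2) _ IA) (is_RInt_scal _ _ _ r _ IB)) IC) as I1.
  pose proof (is_RInt_opp _ _ _ _ IK) as I2.
  assert (I3 : is_RInt (fun s => opp (dK s)) 0 (2*PI) (plus (plus (scal (r ^ 2) (G2 r)) (scal r (G1 r))) (Gw2 r))).
  { apply (is_RInt_ext _ _ _ _ _) with (2 := I1). intros s _. 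
    unfold dK, opp, plus, scal; simpl. unfold mult; simpl.
    pose proof (lap_id r s H). unfold opp; simpl. nra. }
  apply (@is_RInt_unique R_CompleteNormedModule) in I2. apply (@is_RInt_unique R_CompleteNormedModule) in I3. pose proof (eq_trans (eq_sym I3) I2) as I4. clear -I4. revert I4.
  unfold minus, opp, plus, scal; simpl. unfold mult, opp, plus; simpl. lra.
Qed.

End Weight.
End Polar.


Ltac toR := try (match goal with |- @eq _ ?x ?y => change (@eq R x y) end).

Lemma RInt_neg (f g : R -> R) : ex_RInt f 0 (2*PI) -> (forall s, g s = - f s) ->
  RInt g 0 (2*PI) = - RInt f 0 (2*PI).
Proof. intros H E. apply (@is_RInt_unique R_CompleteNormedModule).
  apply (is_RInt_ext (fun s => opp (f s))). intros; rewrite E; reflexivity.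
  apply (is_RInt_opp f). apply (@RInt_correct R_CompleteNormedModule); auto. Qed.

Lemma const_on f df r : 0 < r -> (forall x, 0 <= x <= r -> is_derive f x (df x)) ->
  (forall x, 0 < x < r -> df x = 0) -> f r = f 0.
Proof.
  intros Hr Hd H0.
  destruct (MVT_cor2 f df 0 r Hr) as [c [E Hc]].
  - intros x Hx. apply is_derive_Reals. apply Hd; lra.
  - rewrite H0 in E by lra. lra.
Qed.

Lemma trig_int_c p q : RInt (fun s => (p * cos s + q * sin s) * cos s) 0 (2*PI) = p * PI.
Proof.
  apply (@is_RInt_unique R_CompleteNormedModule).
  replace (p * PI) with (minus ((fun s => p * ((s + sin s * cos s) / 2) + q * (sin s ^ 2 / 2)) (2*PI))
                                ((fun s => p * ((s + sin s * cos s) / 2) + q * (sin s ^ 2 / 2)) 0)).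
  2:{ cbv beta. unfold minus, plus, opp; simpl. toR. rewrite sin_2PI, cos_2PI, sin_0, cos_0. field. }
  apply (@is_RInt_derive R_CompleteNormedModule (fun s => p * ((s + sin s * cos s) / 2) + q * (sin s ^ 2 / 2))).
  - intros x _. auto_derive; auto. pose proof (sin2_cos2 x) as H. unfold Rsqr in H. pose proof (f_equal (Rmult p) H). pose proof (f_equal (Rmult q) H). lra.
  - intros x _. apply (continuous_mult (fun s => p * cos s + q * sin s) cos).
    apply (continuous_plus (fun s => p * cos s) (fun s => q * sin s)).
    apply (continuous_mult (fun _ => p) cos). apply continuous_const. apply cos_cont.
    apply (continuous_mult (fun _ => q) sin). apply continuous_const. apply sin_cont. apply cos_cont.
Qed.

Lemma trig_int_s p q : RInt (fun s => (p * cos s + q * sin s) * sin s) 0 (2*PI) = q * PI.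
Proof.
  apply (@is_RInt_unique R_CompleteNormedModule).
  replace (q * PI) with (minus ((fun s => q * ((s - sin s * cos s) / 2) + p * (sin s ^ 2 / 2)) (2*PI))
                                ((fun s => q * ((s - sin s * cos s) / 2) + p * (sin s ^ 2 / 2)) 0)).
  2:{ cbv beta. unfold minus, plus, opp; simpl. toR. rewrite sin_2PI, cos_2PI, sin_0, cos_0. field. }
  apply (@is_RInt_derive R_CompleteNormedModule (fun s => q * ((s - sin s * cos s) / 2) + p * (sin s ^ 2 / 2))).
  - intros x _. auto_derive; auto. pose proof (sin2_cos2 x) as H. unfold Rsqr in H. pose proof (f_equal (Rmult p) H). pose proof (f_equal (Rmult q) H). lra.
  - intros x _. apply (continuous_mult (fun s => p * cos s + q * sin s) sin).
    apply (continuous_plus (fun s => p * cos s) (fun s => q * sin s)).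
    apply (continuous_mult (fun _ => p) cos). apply continuous_const. apply cos_cont.
    apply (continuous_mult (fun _ => q) sin). apply continuous_const. apply sin_cont. apply sin_cont.
Qed.

Lemma lin2 (f g : R -> R) al be : ex_RInt f 0 (2*PI) -> ex_RInt g 0 (2*PI) ->
  RInt (fun s => al * f s + be * g s) 0 (2*PI) = al * RInt f 0 (2*PI) + be * RInt g 0 (2*PI).
Proof. intros Hf Hg. apply (@is_RInt_unique R_CompleteNormedModule).
  apply (is_RInt_plus (fun s => scal al (f s)) (fun s => scal be (g s))).
  apply (is_RInt_scal f). apply (@RInt_correct R_CompleteNormedModule); auto.
  apply (is_RInt_scal g). apply (@RInt_correct R_CompleteNormedModule); auto. Qed.

Section MV.
Variables u ux uy uxx uxy uyx uyy : R -> R -> R.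
Hypothesis Hh : harm u ux uy uxx uxy uyx uyy.
Variables a b R0 : R.
Hypothesis HR : forall r s, Rabs r < R0 -> in_D (a + r * cos s) (b + r * sin s).

Lemma RInt_zero_fun (f : R -> R) : RInt (fun s => f s * 0) 0 (2*PI) = 0.
Proof. rewrite (RInt_ext _ (fun _ => 0)). rewrite RInt_const. apply Rmult_0_r.
  intros; apply Rmult_0_r. Qed.

Lemma mvp r : 0 <= r < R0 -> RInt (fun s => pol u a b r s * 1) 0 (2*PI) = 2 * PI * u a b.
Proof.
  intros Hr.
  assert (Hw : forall s, is_derive (fun _ : R => 1) s ((fun _ => 0) s)) by (intros; auto_derive; auto).
  assert (Hw1 : forall s, is_derive (fun _ : R => 0) s ((fun _ => 0) s)) by (intros; auto_derive; auto).
  assert (Hw2 : forall s, continuous (fun _ : R => 0) s) by (intros; apply continuous_const).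
  pose (Gf := G u a b (fun _ => 1)). pose (G1f := G1 ux uy a b (fun _ => 1)). pose (G2f := G2 uxx uxy uyx uyy a b (fun _ => 1)).
  assert (dG : forall x, Rabs x < R0 -> is_derive Gf x (G1f x)).
  { intros x Hx. apply (dG u ux uy uxx uxy uyx uyy Hh a b R0 HR _ _ Hw); auto. }
  assert (dG1 : forall x, Rabs x < R0 -> is_derive G1f x (G2f x)).
  { intros x Hx. apply (dG1 u ux uy uxx uxy uyx uyy Hh a b R0 HR _ _ Hw); auto. }
  assert (od : forall x, Rabs x < R0 -> x ^ 2 * G2f x + x * G1f x = 0).
  { intros x Hx. pose proof (ode u ux uy uxx uxy uyx uyy Hh a b R0 HR _ _ _ Hw Hw1 Hw2 eq_refl eq_refl x Hx) as E.
    unfold Gw2 in E. rewrite RInt_zero_fun in E. unfold Gf, G1f, G2f. lra. }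
  assert (k0 : forall x, 0 < x < R0 -> G1f x = 0).
  { intros x Hx. 
    assert (E : (fun y => y * G1f y) x = (fun y => y * G1f y) 0).
    { refine (const_on (fun y => y * G1f y) (fun y => G1f y + y * G2f y) x _ _ _); [lra| |].
      - intros y Hy. evar_last. apply (is_derive_mult (fun y => y) G1f). apply is_derive_id. apply dG1.
        rewrite Rabs_right by lra. lra. intros; apply Rmult_comm. unfold plus, mult, one; simpl. ring.
      - intros y Hy. pose proof (od y ltac:(rewrite Rabs_right by lra; lra)).
        apply (Rmult_eq_reg_l y); [|lra]. simpl in H. nra. }
    simpl in E. apply (Rmult_eq_reg_l x); [|lra]. lra. }
  destruct (Req_dec r 0) as [->|Hr0].
  - change (Gf 0 = 2 * PI * u a b). unfold Gf, G, pol.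
    rewrite (RInt_ext _ (fun _ => u a b)). rewrite RInt_const. unfold scal; simpl; unfold mult; simpl. toR. ring.
    intros; toR; rewrite !Rmult_0_l, !Rplus_0_r; ring.
  - change (Gf r = 2 * PI * u a b).
    rewrite (const_on Gf G1f r); [ | lra | | ].
    + unfold Gf, G, pol.
      rewrite (RInt_ext _ (fun _ => u a b)). rewrite RInt_const. unfold scal; simpl; unfold mult; simpl. toR. ring.
      intros; toR; rewrite !Rmult_0_l, !Rplus_0_r; ring.
    + intros x Hx. apply dG. rewrite Rabs_right by lra. lra.
    + intros x Hx. apply k0. lra.
Qed.


Lemma mode1 (w w1 : R -> R) (Hw : forall s, is_derive w s (w1 s)) (Hw1 : forall s, is_derive w1 s (- w s))
  (Pw : w (2*PI) = w 0) (Pw1 : w1 (2*PI) = w1 0) r :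
  0 < r < R0 -> G u a b w r = r * G1 ux uy a b w 0.
Proof.
  intros Hr.
  assert (Hwc : forall s, continuous w s).
  { intros s. apply (ex_derive_continuous w). exists (w1 s). apply Hw. }
  assert (Hw2 : forall s, continuous (fun s => - w s) s).
  { intros s. apply (continuous_opp w). apply Hwc. }
  pose (Gf := G u a b w). pose (G1f := G1 ux uy a b w). pose (G2f := G2 uxx uxy uyx uyy a b w).
  assert (dG : forall x, Rabs x < R0 -> is_derive Gf x (G1f x)).
  { intros x Hx. apply (dG u ux uy uxx uxy uyx uyy Hh a b R0 HR _ _ Hw); auto. }
  assert (dG1 : forall x, Rabs x < R0 -> is_derive G1f x (G2f x)).
  { intros x Hx. apply (dG1 u ux uy uxx uxy uyx uyy Hh a b R0 HR _ _ Hw); auto. }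
  assert (od : forall x, Rabs x < R0 -> x ^ 2 * G2f x + x * G1f x - Gf x = 0).
  { intros x Hx. pose proof (ode u ux uy uxx uxy uyx uyy Hh a b R0 HR w w1 (fun s => - w s) Hw Hw1 Hw2 Pw Pw1 x Hx) as E.
    unfold Gw2 in E.
    rewrite (RInt_neg (fun s => pol u a b x s * w s)) in E.
    3:{ intros; ring. }
    2:{ apply (@ex_RInt_continuous R_CompleteNormedModule). intros z _.
        apply (c2d_cont_t (fun r s => pol u a b r s * w s)). apply continuity_2d_pt_mult.
        eapply c_H; eauto. apply w_c2d, Hwc. }
    unfold Gf, G1f, G2f, G. lra. }
  assert (k0 : forall x, 0 < x < R0 -> x * G1f x - Gf x = 0).
  { intros x Hx.
    assert (E : (fun y => y * (y * G1f y - Gf y)) x = (fun y => y * (y * G1f y - Gf y)) 0).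
    { refine (const_on (fun y => y * (y * G1f y - Gf y)) (fun y => y ^ 2 * G2f y + y * G1f y - Gf y) x _ _ _); [lra| |].
      - intros y Hy. assert (Hy' : Rabs y < R0) by (rewrite Rabs_right by lra; lra).
        evar_last. apply (is_derive_mult (fun y => y) (fun y => y * G1f y - Gf y)). apply is_derive_id.
        apply (is_derive_minus (fun y => y * G1f y) Gf).
        apply (is_derive_mult (fun y => y) G1f). apply is_derive_id. apply dG1; auto. intros; apply Rmult_comm.
        apply dG; auto. intros; apply Rmult_comm. unfold minus; unfold plus, opp, mult, one; simpl. toR. ring.
      - intros y Hy. apply od. rewrite Rabs_right by lra; lra. }
    simpl in E. apply (Rmult_eq_reg_l x); [|lra]. lra. }
  assert (k1 : forall x, 0 < x < R0 -> G2f x = 0).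
  { intros x Hx. pose proof (od x ltac:(rewrite Rabs_right by lra; lra)). pose proof (k0 x Hx).
    assert (x ^ 2 * G2f x = 0) by lra. simpl in H1.
    apply (Rmult_eq_reg_l (x * (x * 1))); [|nra]. lra. }
  assert (E1 : G1f r = G1f 0).
  { apply (const_on G1f G2f r); [lra| |].
    - intros y Hy. apply dG1. rewrite Rabs_right by lra; lra.
    - intros y Hy. apply k1. lra. }
  change (Gf r = r * G1f 0). rewrite <- E1. pose proof (k0 r Hr). lra.
Qed.


Lemma ex_pol (w : R -> R) rho : Rabs rho < R0 -> (forall s, continuous w s) ->
  ex_RInt (fun s => pol u a b rho s * w s) 0 (2*PI).
Proof. intros H Hw. apply (@ex_RInt_continuous R_CompleteNormedModule). intros z _.
  apply (c2d_cont_t (fun r s => pol u a b r s * w s)). apply continuity_2d_pt_mult.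
  eapply c_H; eauto. apply w_c2d, Hw. Qed.

Lemma G1_0 (w : R -> R) : G1 ux uy a b w 0 = RInt (fun s => (ux a b * cos s + uy a b * sin s) * w s) 0 (2*PI).
Proof. unfold G1. apply RInt_ext. intros. unfold Hr, pol. rewrite !Rmult_0_l, !Rplus_0_r. reflexivity. Qed.

Lemma grad_bound rho al be : 0 < rho < R0 -> (forall s, 0 <= pol u a b rho s) -> al ^ 2 + be ^ 2 <= 1 ->
  Rabs (al * ux a b + be * uy a b) <= 2 * u a b / rho.
Proof.
  intros Hr Hpos Hab.
  assert (Hr' : Rabs rho < R0) by (rewrite Rabs_right by lra; lra).
  assert (Ec : G u a b cos rho = rho * (ux a b * PI)).
  { rewrite (mode1 cos (fun s => - sin s)).
    all: try (rewrite G1_0, trig_int_c; reflexivity).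
    all: try (intros; auto_derive; auto; ring).
    all: try (rewrite cos_2PI, cos_0; reflexivity).
    all: try (rewrite sin_2PI, sin_0; reflexivity).
    all: try lra. }
  assert (Es : G u a b sin rho = rho * (uy a b * PI)).
  { rewrite (mode1 sin cos).
    all: try (rewrite G1_0, trig_int_s; reflexivity).
    all: try (intros; auto_derive; auto; ring).
    all: try (rewrite cos_2PI, cos_0; reflexivity).
    all: try (rewrite sin_2PI, sin_0; reflexivity).
    all: try lra. }
  unfold G in Ec, Es.
  assert (EI : RInt (fun s => al * (pol u a b rho s * cos s) + be * (pol u a b rho s * sin s)) 0 (2*PI)
           = al * (rho * (ux a b * PI)) + be * (rho * (uy a b * PI))).
  { rewrite lin2. rewrite Ec, Es. reflexivity.
    apply ex_pol; auto. apply cos_cont. apply ex_pol; auto. apply sin_cont. }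
  assert (EM : RInt (fun s => pol u a b rho s * 1) 0 (2*PI) = 2 * PI * u a b) by (apply mvp; lra).
  assert (exI : ex_RInt (fun s => al * (pol u a b rho s * cos s) + be * (pol u a b rho s * sin s)) 0 (2*PI)).
  { apply (ex_RInt_ext (fun s => pol u a b rho s * (al * cos s + be * sin s))).
    intros x _; toR; ring. apply ex_pol; auto. intros s.
    apply (continuous_plus (fun s => al * cos s) (fun s => be * sin s)).
    apply (continuous_mult (fun _ => al) cos). apply continuous_const. apply cos_cont.
    apply (continuous_mult (fun _ => be) sin). apply continuous_const. apply sin_cont. }
  assert (ex1 : ex_RInt (fun s => pol u a b rho s * 1) 0 (2*PI)).
  { apply ex_pol; auto. intros; apply continuous_const. }
  assert (pt : forall s, Rabs (al * cos s + be * sin s) <= 1).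
  { intros s. apply Rabs_le. pose proof (sin2_cos2 s) as H. unfold Rsqr in H.
    assert ((al * cos s + be * sin s) ^ 2 <= 1).
    { assert (0 <= (al * sin s - be * cos s) ^ 2) by (apply pow2_ge_0).
      assert (E : (al * cos s + be * sin s) ^ 2 + (al * sin s - be * cos s) ^ 2 = (al ^ 2 + be ^ 2) * (sin s * sin s + cos s * cos s)) by ring.
      rewrite H, Rmult_1_r in E. lra. }
    split; nra. }
  assert (U : RInt (fun s => al * (pol u a b rho s * cos s) + be * (pol u a b rho s * sin s)) 0 (2*PI)
              <= RInt (fun s => pol u a b rho s * 1) 0 (2*PI)).
  { apply RInt_le; auto. pose proof PI_RGT_0; lra.
    intros x _. specialize (pt x). specialize (Hpos x). apply Rabs_le_between in pt.
    replace (al * (pol u a b rho x * cos x) + be * (pol u a b rho x * sin x)) with (pol u a b rho x * (al * cos x + be * sin x)) by ring.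
    apply Rmult_le_compat_l; lra. }
  assert (L : RInt (fun s => - (pol u a b rho s * 1)) 0 (2*PI)
              <= RInt (fun s => al * (pol u a b rho s * cos s) + be * (pol u a b rho s * sin s)) 0 (2*PI)).
  { apply RInt_le; auto. pose proof PI_RGT_0; lra.
    apply (ex_RInt_ext (fun s => opp (pol u a b rho s * 1))). intros; reflexivity.
    apply (@ex_RInt_opp R_CompleteNormedModule). auto.
    intros x _. specialize (pt x). specialize (Hpos x). apply Rabs_le_between in pt.
    replace (al * (pol u a b rho x * cos x) + be * (pol u a b rho x * sin x)) with (pol u a b rho x * (al * cos x + be * sin x)) by ring.
    nra. }
  rewrite (RInt_neg (fun s => pol u a b rho s * 1)) in L; auto.
  rewrite EI, EM in U, L. pose proof PI_RGT_0.
  apply Rabs_le. split.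
  - apply (Rmult_le_reg_r (rho * PI)). nra. unfold Rdiv.
    replace (- (2 * u a b * / rho) * (rho * PI)) with (- (2 * PI * u a b)) by (field; lra). nra.
  - apply (Rmult_le_reg_r (rho * PI)). nra. unfold Rdiv.
    replace (2 * u a b * / rho * (rho * PI)) with (2 * PI * u a b) by (field; lra). nra.
Qed.

End MV.


Lemma wlog_eq p : 0 <= p < 1 -> wlog p = 1 - ln (1 - p).
Proof. intros H. unfold wlog, Rdiv. rewrite ln_mult, ln_exp, ln_Rinv; try lra. apply exp_pos.
  apply Rinv_0_lt_compat; lra. Qed.

Lemma ln_le' x y : 0 < x -> x <= y -> ln x <= ln y.
Proof. intros H1 H2. destruct (Rle_lt_or_eq_dec _ _ H2). left; apply ln_increasing; auto. subst; lra. Qed.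

Lemma wlog_ge1 p : 0 <= p < 1 -> 1 <= wlog p.
Proof. intros H. rewrite wlog_eq by auto. assert (ln (1 - p) <= ln 1) by (apply ln_le'; lra).
  rewrite ln_1 in H0. lra. Qed.

Lemma wlog_mono p q : 0 <= p -> p <= q -> q < 1 -> wlog p <= wlog q.
Proof. intros. rewrite !wlog_eq by lra. assert (ln (1 - q) <= ln (1 - p)) by (apply ln_le'; lra). lra. Qed.

Lemma wlog_half r : 0 < r < 1 -> wlog ((1 + r) / 2) = wlog r + ln 2.
Proof. intros H. rewrite !wlog_eq by lra.
  replace (1 - (1 + r) / 2) with ((1 - r) * / 2) by field.
  rewrite ln_mult, ln_Rinv; lra. Qed.

Lemma ln2_lt1 : ln 2 < 1.
Proof. rewrite <- (ln_exp 1). apply ln_increasing. lra.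
  pose proof (exp_ineq1 1). lra. Qed.

Lemma gron (phi dphi : R -> R) K d : 0 <= K ->
  (forall s, is_derive phi s (dphi s)) -> (forall s, Rabs (dphi s) <= K * phi s) ->
  phi d <= phi 0 * exp (K * Rabs d).
Proof.
  intros HK Hd Hb.
  destruct (Rle_or_lt 0 d) as [Hd0|Hd0].
  - rewrite Rabs_right by lra.
    destruct (Req_dec d 0) as [->|Hne]. rewrite Rmult_0_r, exp_0; lra.
    destruct (MVT_cor2 (fun s => phi s * exp (- (K * s))) (fun s => (dphi s - K * phi s) * exp (- (K * s))) 0 d ltac:(lra))
      as [c [E Hc]].
    { intros c Hc. apply is_derive_Reals. evar_last. apply (is_derive_mult phi (fun s => exp (- (K * s)))).
      apply Hd. auto_derive; auto. intros; apply Rmult_comm. unfold plus, mult; simpl. ring. }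
    assert (dphi c - K * phi c <= 0) by (specialize (Hb c); apply Rabs_le_between in Hb; lra).
    assert ((dphi c - K * phi c) * exp (- (K * c)) * (d - 0) <= 0).
    { pose proof (exp_pos (- (K * c))). assert (0 <= (- (dphi c - K * phi c)) * exp (- (K * c)) * (d - 0)).
      repeat apply Rmult_le_pos; lra. lra. }
    rewrite Rmult_0_r, Ropp_0, exp_0, Rmult_1_r in E.
    assert (phi d * exp (- (K * d)) <= phi 0) by lra.
    apply (Rmult_le_compat_r (exp (K * d))) in H1; [|left; apply exp_pos].
    rewrite Rmult_assoc, <- exp_plus in H1. replace (- (K * d) + K * d) with 0 in H1 by ring.
    rewrite exp_0, Rmult_1_r in H1. exact H1.
  - rewrite Rabs_left by lra.
    destruct (MVT_cor2 (fun s => phi s * exp (K * s)) (fun s => (dphi s + K * phi s) * exp (K * s)) d 0 ltac:(lra))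
      as [c [E Hc]].
    { intros c Hc. apply is_derive_Reals. evar_last. apply (is_derive_mult phi (fun s => exp (K * s))).
      apply Hd. auto_derive; auto. intros; apply Rmult_comm. unfold plus, mult; simpl. ring. }
    assert (0 <= dphi c + K * phi c) by (specialize (Hb c); apply Rabs_le_between in Hb; lra).
    assert (0 <= (dphi c + K * phi c) * exp (K * c) * (0 - d)).
    { pose proof (exp_pos (K * c)). repeat apply Rmult_le_pos; lra. }
    rewrite Rmult_0_r, exp_0, Rmult_1_r in E.
    assert (phi d * exp (K * d) <= phi 0) by lra.
    apply (Rmult_le_compat_r (exp (K * - d))) in H1; [|left; apply exp_pos].
    rewrite Rmult_assoc, <- exp_plus in H1. replace (K * d + K * - d) with 0 in H1 by ring.
    rewrite exp_0, Rmult_1_r in H1. exact H1.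
Qed.

Lemma der_neg f x l : is_derive f x l -> is_derive (fun t => - f t) x (- l).
Proof. intros H. apply (is_derive_opp f). exact H. Qed.

Lemma der_cminus M f x l : is_derive f x l -> is_derive (fun t => M - f t) x (- l).
Proof. intros H. replace (- l) with (0 - l) by ring. apply is_derive_Reals.
  apply (derivable_pt_lim_minus (fun _ => M) f). apply derivable_pt_lim_const. apply is_derive_Reals; exact H. Qed.

Lemma cont2_neg f x y : cont2 f x y -> cont2 (fun a b => - f a b) x y.
Proof. intros H. apply (continuous_opp (fun p : R * R => f (fst p) (snd p))). exact H. Qed.

Lemma cont2_cminus M f x y : cont2 f x y -> cont2 (fun a b => M - f a b) x y.
Proof. intros H. apply (continuous_minus (fun _ : R * R => M) (fun p : R * R => f (fst p) (snd p))).
  apply continuous_const. exact H. Qed.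

Lemma harm_neg M u ux uy uxx uxy uyx uyy : harm u ux uy uxx uxy uyx uyy ->
  harm (fun x y => M - u x y) (fun x y => - ux x y) (fun x y => - uy x y)
       (fun x y => - uxx x y) (fun x y => - uxy x y) (fun x y => - uyx x y) (fun x y => - uyy x y).
Proof.
  intros Hh x y HD. destruct (Hh x y HD) as (d1&d2&d3&d4&d5&d6&c0&c1&c2&c3&c4&c5&c6&L).
  repeat match goal with |- _ /\ _ => split end.
  - exact (der_cminus M (fun t => u t y) x _ d1).
  - exact (der_cminus M (fun t => u x t) y _ d2).
  - exact (der_neg (fun t => ux t y) x _ d3).
  - exact (der_neg (fun t => ux x t) y _ d4).
  - exact (der_neg (fun t => uy t y) x _ d5).
  - exact (der_neg (fun t => uy x t) y _ d6).
  - exact (cont2_cminus M u x y c0).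
  - exact (cont2_neg ux x y c1).
  - exact (cont2_neg uy x y c2).
  - exact (cont2_neg uxx x y c3).
  - exact (cont2_neg uxy x y c4).
  - exact (cont2_neg uyx x y c5).
  - exact (cont2_neg uyy x y c6).
  - lra.
Qed.



Lemma geom r al rho t : 0 <= r ->
  (r * cos al + rho * cos t) ^ 2 + (r * sin al + rho * sin t) ^ 2 <= (r + Rabs rho) ^ 2.
Proof.
  intros Hr.
  replace ((r * cos al + rho * cos t) ^ 2 + (r * sin al + rho * sin t) ^ 2)
    with (r ^ 2 * (sin al * sin al + cos al * cos al) + rho ^ 2 * (sin t * sin t + cos t * cos t)
          + 2 * r * rho * (cos al * cos t + sin al * sin t)) by ring.
  pose proof (sin2_cos2 al) as E1; pose proof (sin2_cos2 t) as E2. unfold Rsqr in E1, E2.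
  rewrite E1, E2, <- cos_minus.
  pose proof (COS_bound (al - t)).
  assert (rho ^ 2 = Rabs rho ^ 2) by (rewrite pow2_abs; reflexivity).
  assert (rho * cos (al - t) <= Rabs rho).
  { eapply Rle_trans. apply Rle_abs. rewrite Rabs_mult.
    pose proof (Rabs_pos rho). assert (Rabs (cos (al - t)) <= 1) by (apply Rabs_le; lra). nra. }
  pose proof (Rabs_pos rho). nra.
Qed.

Lemma sqrt_le_of x y : 0 <= y -> x <= y ^ 2 -> sqrt x <= y.
Proof. intros Hy H. rewrite <- (sqrt_pow2 y Hy). apply sqrt_le_1_alt. exact H. Qed.

Theorem lemma7 :
  forall C sigma : R, 0 < sigma ->
  exists tau1 : R, 0 < tau1 /\
    forall u : R -> R -> R,
      harmonic_D u ->
      is_lub (ratio_set u) C ->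
      forall theta r : R,
        0 <= theta <= 2 * PI ->
        0 < r < 1 ->
        u (r * cos theta) (r * sin theta) > sigma * wlog r ->
        forall delta : R,
          Rabs delta < tau1 * (1 - r) ->
          u (r * cos (theta + delta)) (r * sin (theta + delta)) > sigma / 2 * wlog r.
Proof.
  intros C sigma Hs.
  set (C' := Rmax C sigma).
  assert (HC' : sigma <= C') by apply Rmax_r.
  set (k := 1 + sigma / (4 * C')).
  assert (Hk1 : 1 < k).
  { unfold k. assert (0 < sigma / (4 * C')) by (apply Rdiv_lt_0_compat; lra). lra. }
  exists (ln k / 4). split.
  { assert (0 < ln k) by (rewrite <- ln_1; apply ln_increasing; lra). lra. }
  intros u [ux [uy [uxx [uxy [uyx [uyy Hh0]]]]]] Hlub theta r Hth Hr Hu delta Hd.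
  assert (Hh : harm u ux uy uxx uxy uyx uyy) by exact Hh0. clear Hh0.
  set (L := wlog r) in *.
  assert (HL : 1 <= L) by (apply wlog_ge1; lra).
  assert (Hub : forall x y, in_D x y -> u x y <= C * wlog (sqrt (x ^ 2 + y ^ 2))).
  { intros x y HD. destruct Hlub as [Hup _].
    assert (Hq : 0 <= sqrt (x ^ 2 + y ^ 2) < 1).
    { split. apply sqrt_pos. unfold in_D in HD. rewrite <- sqrt_1. apply sqrt_lt_1_alt. split; [nra|lra]. }
    pose proof (wlog_ge1 _ Hq).
    assert (u x y / wlog (sqrt (x ^ 2 + y ^ 2)) <= C) by (apply Hup; exists x, y; auto).
    apply (Rmult_le_compat_r (wlog (sqrt (x ^ 2 + y ^ 2)))) in H0; [|lra].
    unfold Rdiv in H0. rewrite Rmult_assoc, Rinv_l, Rmult_1_r in H0 by lra. exact H0. }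
  assert (Hnorm : forall al, (r * cos al) ^ 2 + (r * sin al) ^ 2 = r ^ 2).
  { intros al. pose proof (sin2_cos2 al). unfold Rsqr in H. nra. }
  assert (HD0 : forall al, in_D (r * cos al) (r * sin al)).
  { intros al. unfold in_D. rewrite Hnorm. nra. }
  assert (HCs : sigma < C).
  { pose proof (Hub _ _ (HD0 theta)). rewrite Hnorm, sqrt_pow2 in H by lra. fold L in H.
    destruct (Rle_or_lt C sigma) as [Hc|Hc]; [|auto]. assert (C * L <= sigma * L) by (apply Rmult_le_compat_r; lra). lra. }
  assert (EC : C' = C) by (unfold C'; apply Rmax_left; lra).
  set (M := C * (L + ln 2)).
  set (h := fun x y => M - u x y).
  pose proof (harm_neg M _ _ _ _ _ _ _ Hh) as Hh'.
  assert (Hpos : forall x y, x ^ 2 + y ^ 2 <= ((1 + r) / 2) ^ 2 -> 0 <= h x y).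
  { intros x y Hxy. assert (HD : in_D x y) by (unfold in_D; nra).
    pose proof (Hub x y HD).
    assert (wlog (sqrt (x ^ 2 + y ^ 2)) <= wlog ((1 + r) / 2)).
    { apply wlog_mono. apply sqrt_pos. apply sqrt_le_of; lra. lra. }
    rewrite wlog_half in H0 by lra. fold L in H0. unfold h, M. nra. }
  set (rho0 := (1 - r) / 2). set (R0 := 3 * (1 - r) / 4).
  assert (Hgrad : forall al, Rabs ((- sin al) * (- ux (r * cos al) (r * sin al)) + cos al * (- uy (r * cos al) (r * sin al)))
                  <= 2 * h (r * cos al) (r * sin al) / rho0).
  { intros al.
    assert (HR : forall rho t, Rabs rho < R0 -> in_D (r * cos al + rho * cos t) (r * sin al + rho * sin t)).
    { intros rho t Hrho. unfold in_D. eapply Rle_lt_trans. apply geom. lra.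
      pose proof (Rabs_pos rho). unfold R0 in Hrho. nra. }
    assert (Hpol : forall t, 0 <= pol h (r * cos al) (r * sin al) rho0 t).
    { intros t. unfold pol. apply Hpos. eapply Rle_trans. apply geom. lra.
      rewrite Rabs_right by (unfold rho0; lra). unfold rho0. nra. }
    assert (Hab : (- sin al) ^ 2 + cos al ^ 2 <= 1).
    { pose proof (sin2_cos2 al). unfold Rsqr in H. nra. }
    pose proof (grad_bound _ _ _ _ _ _ _ Hh' (r * cos al) (r * sin al) R0 HR rho0 (- sin al) (cos al)
       ltac:(unfold rho0, R0; lra) Hpol Hab) as G. cbv beta in G. exact G. }
  set (phi := fun s => h (r * cos (theta + s)) (r * sin (theta + s))).
  set (dphi := fun s => (- ux (r * cos (theta + s)) (r * sin (theta + s))) * (- (r * sin (theta + s)))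
                      + (- uy (r * cos (theta + s)) (r * sin (theta + s))) * (r * cos (theta + s))).
  assert (Hder : forall s, is_derive phi s (dphi s)).
  { intros s. unfold phi, dphi.
    apply (chain h (fun x y => - ux x y) (fun x y => - uy x y) (fun s => r * cos (theta + s)) (fun s => r * sin (theta + s))).
    - apply (HF_u _ _ _ _ _ _ _ Hh').
    - apply (HC_u _ _ _ _ _ _ _ Hh').
    - apply HD0.
    - auto_derive; auto. ring.
    - auto_derive; auto. ring. }
  assert (Hphi0 : forall s, 0 <= phi s).
  { intros s. unfold phi. apply Hpos. rewrite Hnorm. nra. }
  set (K := 4 / (1 - r)).
  assert (HK : 0 <= K) by (unfold K; apply Rlt_le, Rdiv_lt_0_compat; lra).
  assert (Hbd : forall s, Rabs (dphi s) <= K * phi s).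
  { intros s. specialize (Hgrad (theta + s)). specialize (Hphi0 s).
    replace (dphi s) with (r * ((- sin (theta + s)) * (- ux (r * cos (theta + s)) (r * sin (theta + s)))
        + cos (theta + s) * (- uy (r * cos (theta + s)) (r * sin (theta + s))))) by (unfold dphi; ring).
    rewrite Rabs_mult, Rabs_right by lra.
    fold (phi s) in Hgrad.
    replace (2 * phi s / rho0) with (K * phi s) in Hgrad by (unfold K, rho0; field; lra).
    assert (0 <= K * phi s) by (apply Rmult_le_pos; lra).
    pose proof (Rabs_pos ((- sin (theta + s)) * (- ux (r * cos (theta + s)) (r * sin (theta + s)))
        + cos (theta + s) * (- uy (r * cos (theta + s)) (r * sin (theta + s))))).
    nra. }
  pose proof (gron phi dphi K delta HK Hder Hbd) as Gr.
  assert (Hexp : exp (K * Rabs delta) <= k).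
  { rewrite <- (exp_ln k) by lra. left. apply exp_increasing.
    unfold K. apply (Rmult_lt_reg_r (1 - r)); [lra|].
    replace (4 / (1 - r) * Rabs delta * (1 - r)) with (4 * Rabs delta) by (field; lra). lra. }
  assert (Gr2 : phi delta <= phi 0 * k).
  { eapply Rle_trans. exact Gr. apply Rmult_le_compat_l; auto. }
  unfold phi, h in Gr2. rewrite Rplus_0_r in Gr2.
  assert (Ek : (k - 1) * M = sigma * (L + ln 2) / 4).
  { unfold k, M. rewrite EC. field. lra. }
  pose proof ln2_lt1.
  assert (u (r * cos theta) (r * sin theta) * k > sigma * L * k).
  { apply Rmult_gt_compat_r; lra. }
  assert (0 <= sigma * L * (k - 1)) by (apply Rmult_le_pos; [apply Rmult_le_pos|]; lra).
  assert (sigma * ln 2 < sigma * L) by (apply Rmult_lt_compat_l; lra).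
  assert (E2 : (M - u (r * cos theta) (r * sin theta)) * k = M * k - u (r * cos theta) (r * sin theta) * k) by ring.
  assert (E3 : (k - 1) * M = M * k - M) by ring.
  assert (E4 : sigma * L * (k - 1) = sigma * L * k - sigma * L) by ring.
  assert (E5 : sigma * (L + ln 2) / 4 = sigma * L / 4 + sigma * ln 2 / 4) by field.
  assert (E6 : sigma / 2 * L = sigma * L / 2) by field.
  rewrite E6. lra.
Qed.
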